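(* Let $k,n,m$ be positive integers with $n+m\le k$ and $q$ a prime power. Let $\mathbb{T}$ be the set of $1$-dimensional subspaces of $\mathbb{F}_q^k$ and let $\mathbb{X}=\{\{T_1,\dots,T_n\}\subseteq\mathbb{T}:\dim(T_1+\cdots+T_n)=n\}$, $\mathbb{Y}=\{\{T_1,\dots,T_m\}\subseteq\mathbb{T}:\dim(T_1+\cdots+T_m)=m\}$, $\mathbb{Z}=\{\{T_1,\dots,T_{n+m}\}\subseteq\mathbb{T}:\dim(T_1+\cdots+T_{n+m})=n+m\}$. Let $B$ be the bipartite graph with left vertex set $\mathbb{X}$, right vertex set $\mathbb{Y}$, and $X$ adjacent to $Y$ iff $X\cup Y\in\mathbb{Z}$. For $Z\in\mathbb{Z}$, the set $\mathcal{C}_Z=\{\{X,Z\setminus X\}: X\subseteq Z,\ |X|=n\}$ is a subset of $E(B)$ and is an induced matching of $B$ of size $\binom{n+m}{m}$.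
   Context: An induced matching of a bipartite graph $B$ is a set $\mathcal{C}\subseteq E(B)$ such that for any two distinct $\{k_1,f_1\},\{k_2,f_2\}\in\mathcal{C}$: $k_1\ne k_2$, $f_1\ne f_2$, and $\{k_1,f_2\},\{k_2,f_1\}\notin E(B)$. *)

(* Defs.v *)
From mathcomp Require Import all_boot all_order all_algebra all_field.
Set Implicit Arguments. Unset Strict Implicit. Unset Printing Implicit Defensive.
Import GRing.Theory.
Local Open Scope ring_scope.

(* Subspaces of F^k are represented canonically by square k x k matrices A
   with <<A>>%MS == A (row space; canonical representative). *)

Definition lines (F : finFieldType) (k : nat) : {set 'M[F]_k} :=
  [set A : 'M[F]_k | (<<A>>%MS == A) && (\rank A == 1%N)].

Definition indep_lines (F : finFieldType) (k r : nat) : {set {set 'M[F]_k}} :=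
  [set X : {set 'M[F]_k} | [&& X \subset lines F k, #|X| == r
                             & \rank (\sum_(T in X) T)%MS == r]].

Definition Bedges (F : finFieldType) (k n m : nat)
  : {set {set 'M[F]_k} * {set 'M[F]_k}} :=
  [set XY | [&& XY.1 \in indep_lines F k n, XY.2 \in indep_lines F k m
              & XY.1 :|: XY.2 \in indep_lines F k (n + m)]].

Definition induced_matching (L R : finType) (E C : {set L * R}) : Prop :=
  C \subset E /\
  forall e1 e2, e1 \in C -> e2 \in C -> e1 != e2 ->
    [/\ e1.1 != e2.1, e1.2 != e2.2, (e1.1, e2.2) \notin E
      & (e2.1, e1.2) \notin E].

Definition CZ (F : finFieldType) (k n : nat) (Z : {set 'M[F]_k})
  : {set {set 'M[F]_k} * {set 'M[F]_k}} :=
  [set (X, Z :\: X) | X in [set X in powerset Z | #|X| == n]].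

(* Main.v *)
Require Import Defs.
From mathcomp Require Import all_boot all_order all_algebra all_field.
From mathcomp Require Import zify.

Set Implicit Arguments.
Section H.
Variables (F : finFieldType) (k : nat).

Lemma rank_sum_le (X : {set 'M[F]_k}) :
  X \subset lines F k -> (\rank (\sum_(T in X) T)%MS <= #|X|)%N.
Proof.
move=> sX.
have -> : #|X| = (\sum_(T in X) \rank T)%N.
  rewrite -sum1_card; apply: eq_bigr => T TX.
  by move: (subsetP sX T TX); rewrite inE => /andP[_ /eqP ->].
apply: (big_ind2 (fun (a : 'M[F]_k) b => \rank a <= b)%N).
- by rewrite mxrank0.
- move=> x1 x2 y1 y2 h1 h2; apply: leq_trans (mxrank_adds_leqif _ _) _.
  exact: leq_add.
- by [].
Qed.

Lemma sum_split (Z X : {set 'M[F]_k}) : X \subset Z ->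
  (\sum_(T in Z) T)%MS = ((\sum_(T in X) T)%MS + (\sum_(T in (Z :\: X)%SET) T)%MS)%MS.
Proof.
move=> sXZ.
rewrite (bigID (fun T => T \in X)) /=.
have -> : (\sum_(T in Z | T \in X) T)%MS = (\sum_(T in X) T)%MS.
  apply: eq_bigl => T; apply/andP/idP => [[]//|TX]; split=> //.
  exact: (subsetP sXZ).
have -> : (\sum_(T in Z | T \notin X) T)%MS = (\sum_(T in (Z :\: X)%SET) T)%MS.
  by apply: eq_bigl => T; rewrite inE andbC.
by [].
Qed.

Lemma sub_indep (Z X : {set 'M[F]_k}) r : Z \in indep_lines F k r ->
  X \subset Z -> X \in indep_lines F k #|X|.
Proof.
rewrite !inE => /and3P[sZ /eqP cZ /eqP rZ] sXZ.
have sX : X \subset lines F k := subset_trans sXZ sZ.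
rewrite sX eqxx /=.
have sD : Z :\: X \subset lines F k := subset_trans (subsetDl _ _) sZ.
rewrite eqn_leq rank_sum_le //=.
have h1 := mxrank_adds_leqif (\sum_(T in X) T)%MS (\sum_(T in (Z :\: X)%SET) T)%MS.
rewrite -(sum_split sXZ) rZ -cZ in h1.
have h2 := rank_sum_le sD.
have h3 : #|Z| = (#|X| + #|Z :\: X|)%N.
  by rewrite cardsD (setIidPr sXZ) subnKC // subset_leq_card.
rewrite h3 in h1.
have := leq_trans h1 (leq_add (leqnn _) h2).
by rewrite leq_add2r.
Qed.

End H.

Theorem lemma10 (F : finFieldType) (k n m : nat)
  (hk : 0 < k) (hn : 0 < n) (hm : 0 < m) (hnmk : n + m <= k)
  (Z : {set 'M[F]_k}) (hZ : Z \in indep_lines F k (n + m)) :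
  CZ n Z \subset Bedges F k n m /\
  induced_matching (Bedges F k n m) (CZ n Z) /\
  #|CZ n Z| = 'C(n + m, m).
Proof.
have cZ : #|Z| = (n + m)%N by move: hZ; rewrite inE => /and3P[_ /eqP ->].
have memC : forall e, e \in CZ n Z ->
    exists X, [/\ e = (X, Z :\: X), X \subset Z & #|X| = n].
  move=> e /imsetP[X]; rewrite !inE => /andP[sXZ /eqP cX] ->.
  by exists X.
have cD : forall X : {set 'M[F]_k}, X \subset Z -> #|X| = n -> #|Z :\: X| = m.
  move=> X sXZ cX; rewrite cardsD (setIidPr sXZ) cZ cX.
  by rewrite addKn.
have sub1 : CZ n Z \subset Bedges F k n m.
  apply/subsetP => e /memC[X [-> sXZ cX]].
  rewrite inE /=.
  have := sub_indep hZ sXZ; rewrite cX => ->.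
  have := sub_indep hZ (subsetDl Z X); rewrite (cD X sXZ cX) => -> /=.
  have -> : X :|: Z :\: X = Z.
    apply/setP=> x; rewrite !inE; case: (boolP (x \in X)) => //= xX.
    by rewrite (subsetP sXZ x xX).
  exact: hZ.
split=> //; split.
  split=> // e1 e2 /memC[X1 [-> s1 c1]] /memC[X2 [-> s2 c2]] ne /=.
  have nX : X1 != X2 by apply: contraNneq ne => ->.
  have nD : Z :\: X1 != Z :\: X2.
    apply: contraNneq nX => eD.
    have e : forall X : {set 'M[F]_k}, X \subset Z -> Z :\: (Z :\: X) = X.
      by move=> X sX; rewrite setDDr setDv set0U (setIidPr sX).
    by rewrite -(e X1 s1) -(e X2 s2) eD.
  have bad : forall A B : {set 'M[F]_k}, A \subset Z -> B \subset Z ->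
      #|A| = n -> #|B| = n -> A != B -> (A, Z :\: B) \notin Bedges F k n m.
    move=> A B sA sB cA cB nAB; rewrite !inE /=.
    apply/negP => /and3P[_ _ /and3P[_ /eqP cU _]].
    move: cU; rewrite cardsU cD // cA.
    have hI : #|A :&: (Z :\: B)| != 0%N.
      rewrite cards_eq0; apply: contra nAB => /eqP hI.
      rewrite eqEcard cA cB leqnn andbT.
      apply/subsetP => x xA; apply/negPn/negP => xB.
      have : x \in A :&: (Z :\: B) by rewrite !inE xA xB (subsetP sA).
      by rewrite hI inE.
    move=> h; move: hI; rewrite -lt0n => hI.
    have hle : (#|A :&: (Z :\: B)| <= n)%N.
      by rewrite -cA subset_leq_card // subsetIl.
    move: h hI hle hn hm; clear; lia.
  split=> //.
  - exact: bad.
  - by apply: bad; rewrite // eq_sym.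
have inj : injective (fun X : {set 'M[F]_k} => (X, Z :\: X)) by move=> A B [].
rewrite /CZ (card_imset _ inj).
have -> : [set X in powerset Z | #|X| == n] = [set A : {set 'M[F]_k} | A \subset Z & #|A| == n].
  by apply/setP => A; rewrite !inE.
by rewrite cards_draws cZ -bin_sub ?leq_addr // addKn.
Qed.
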